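(* With the convention $W_0(t)=2$, the generating function $W(t,z)=\sum_{n\ge 0}W_n(t)z^n$ is \[ W(t,z)=\frac{2-2z^2}{1-z-2z^2-2(t-1)z^3}. \]
   Context: Seating model. A circular table has $n\ge 1$ seats, with exactly one napkin between each pair of adjacent seats ($n$ napkins in total). ''Left'' and ''right'' are from the perspective of a seated diner. Diners $1,\dots,n$ arrive in this order and a maitre d' chooses a seat for each. A preference order is $\sigma=(\sigma_1,\dots,\sigma_n)\in\{-1,1\}^n$, where $\sigma_j=+1$ means diner $j$ prefers the napkin on their right and $\sigma_j=-1$ the napkin on their left. When diner $j$ is seated, they take their preferred adjacent napkin if it is still on the table; otherwise the other adjacent napkin if still on the table; otherwise they are napkinless. The maitre d' observes which napkin each seated diner takes. The ''previous diner'' means the most recently seated diner. Algorithm $W$ (trap setting). Seat diner 1; the primary direction $d\in\{\text{left},\text{right}\}$ is the side of the napkin diner 1 takes. All movement below is in direction $d$. (W1) If the two seats at distance 1 and 2 in direction $d$ from the previous diner's seat are both empty, go to W2; otherwise go to W4. (W2) If the previous diner took the napkin on their side $d$, seat the next diner two seats in direction $d$ from the previous diner and return to W1; otherwise go to W3. (W3) Seat the next diner one seat in direction $d$ from the previous diner and return to W1. (W4) Seat all remaining diners, one at a time in order of arrival, in the empty seats, in the order in which these seats are encountered moving in direction $d$ starting from diner 1's seat. For $n\ge1$, $\nu_W(\sigma)$ is the number of napkinless diners when the $n$ diners with preference order $\sigma$ are seated at the circular table with $n$ seats by algorithm $W$, and $W_n(t)=\sum_{\sigma\in\{-1,1\}^n}t^{\nu_W(\sigma)}$.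 *)

(* Defs.v *)
From mathcomp Require Import all_boot all_order all_algebra.
Set Implicit Arguments. Unset Strict Implicit. Unset Printing Implicit Defensive.
Import GRing.Theory.
Local Open Scope ring_scope.

(* Napkin k lies between seat k and seat k+1 (mod n).  Directions are encoded
   by booleans: true = right, false = left.  Moving right from seat s leads to
   seat s+1, moving left to seat s-1 (mod n); hence the napkin on the right of
   seat s is napkin s and the napkin on its left is napkin s-1.
   A preference order sigma in {-1,1}^n is encoded as a sequence of n booleans
   (true <-> +1 = right, false <-> -1 = left), the j-th entry for diner j+1. *)

Definition stepS (n : nat) (e : bool) (s : nat) : nat :=
  if e then (s.+1 %% n)%N else ((s + n).-1 %% n)%N.

Definition napkinS (n : nat) (e : bool) (s : nat) : nat :=
  if e then s else ((s + n).-1 %% n)%N.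

Record wstate := WState {
  occ : nat -> bool;
  nap : nat -> bool;           (* napkin still on the table? *)
  prev : nat;                  (* seat of the previous diner *)
  prevside : option bool;      (* side of the napkin taken by previous diner *)
  w4 : bool;                   (* algorithm has entered step W4 *)
  cnt : nat                    (* number of napkinless diners so far *)
}.

Definition seat_diner (n : nat) (st : wstate) (s : nat) (p : bool) (enter4 : bool)
  : wstate :=
  let k1 := napkinS n p s in
  let k2 := napkinS n (~~ p) s in
  let occ' := fun x => (x == s) || occ st x in
  if nap st k1 then
    WState occ' (fun k => (k != k1) && nap st k) s (Some p) enter4 (cnt st)
  else if nap st k2 then
    WState occ' (fun k => (k != k2) && nap st k) s (Some (~~ p)) enter4 (cnt st)
  else WState occ' (nap st) s None enter4 (cnt st).+1.

Definition first_empty (n : nat) (e : bool) (st : wstate) : nat :=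
  head 0%N [seq x <- [seq iter k (stepS n e) 0%N | k <- iota 0 n] | ~~ occ st x].

Definition W_step (n : nat) (e : bool) (st : wstate) (p : bool) : wstate :=
  if w4 st then seat_diner n st (first_empty n e st) p true
  else
    let s1 := stepS n e (prev st) in
    let s2 := stepS n e s1 in
    if ~~ occ st s1 && ~~ occ st s2 then
      if prevside st == Some e then seat_diner n st s2 p false
      else seat_diner n st s1 p false
    else seat_diner n st (first_empty n e st) p true.

(* nu_W(sigma): number of napkinless diners. Diner 1 sits at seat 0 and takes
   the napkin on his preferred side (all napkins are present); this side is
   the primary direction d. *)
Definition nuW (n : nat) (sigma : seq bool) : nat :=
  match sigma with
  | [::] => 0%N
  | p1 :: rest =>
    let st0 := WState (fun x => x == 0%N) (fun k => k != napkinS n p1 0%N)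
                      0%N (Some p1) false 0%N in
    cnt (foldl (W_step n p1) st0 rest)
  end.

Definition Wpoly (n : nat) : {poly int} :=
  if n == 0%N then 2%:P
  else \sum_(sigma : n.-tuple bool) 'X^(nuW n sigma).

Definition Dcoef (i : nat) : {poly int} :=
  nth 0 [:: 1; -1; -2%:P; - (2%:P * ('X - 1))] i.
Definition Ncoef (m : nat) : {poly int} :=
  nth 0 [:: 2%:P; 0; -2%:P] m.

(* Main.v *)
Require Import Defs.
From mathcomp Require Import all_boot all_order all_algebra.
From mathcomp Require Import zify ring.
Import GRing.Theory.
Module T1.

Section Pos.
Variables (n : nat) (e : bool).
Hypothesis n0 : (0 < n)%N.

Definition pos (k : nat) : nat := if e then k else ((n - k) %% n)%N.
Definition fnp (k : nat) : nat := if e then k else (n.-1 - k)%N.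
Definition nxt (k : nat) : nat := if k.+1 == n then 0%N else k.+1.
Definition prv (k : nat) : nat := if k == 0%N then n.-1 else k.-1.

Lemma mod_big x : (n <= x < n + n)%N -> (x %% n = x - n)%N.
Proof.
move=> /andP[h1 h2]; rewrite -{1}(subnK h1) modnDr modn_small //; lia.
Qed.

Lemma pos_lt k : (k < n)%N -> (pos k < n)%N.
Proof. by rewrite /pos; case: e => // _; rewrite ltn_mod. Qed.

Lemma pos0 : pos 0 = 0%N.
Proof. by rewrite /pos subn0 modnn; case: e. Qed.

Lemma pos_inj a b : (a < n)%N -> (b < n)%N -> (pos a == pos b) = (a == b).
Proof.
rewrite /pos; case: e => // ha hb.
case: a ha => [|a] ha; case: b hb => [|b] hb; rewrite ?subn0 ?modnn //.
- rewrite modn_small; lia.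
- rewrite modn_small; lia.
- rewrite !modn_small; lia.
Qed.

Lemma fnp_inj a b : (a < n)%N -> (b < n)%N -> (fnp a == fnp b) = (a == b).
Proof. rewrite /fnp; case: e => // ha hb; apply/eqP/eqP; lia. Qed.

Lemma nxt_lt k : (k < n)%N -> (nxt k < n)%N.
Proof. rewrite /nxt; case: eqP; lia. Qed.
Lemma prv_lt k : (k < n)%N -> (prv k < n)%N.
Proof. rewrite /prv; case: eqP; lia. Qed.

Lemma step_pos k : (k < n)%N -> stepS n e (pos k) = pos (nxt k).
Proof.
rewrite /stepS /pos /nxt; case: e => hk.
  case: eqP => h; first by rewrite h modnn.
  rewrite modn_small //; lia.
case: k hk => [|k] hk.
  rewrite subn0 modnn add0n.
  case: eqP => h; first by rewrite -h.
  rewrite !modn_small; lia.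
rewrite (modn_small (_ : n - k.+1 < n)%N); last lia.
rewrite mod_big; last lia.
case: eqP => h; first by rewrite subn0 modnn; lia.
rewrite modn_small; lia.
Qed.

Lemma nap_pos_e k : (k < n)%N -> napkinS n e (pos k) = fnp k.
Proof.
rewrite /napkinS /pos /fnp; case: e => // hk.
case: k hk => [|k] hk.
  rewrite subn0 modnn add0n modn_small; lia.
rewrite (modn_small (_ : n - k.+1 < n)%N); last lia.
rewrite mod_big; lia.
Qed.

Lemma nap_pos_ne k : (k < n)%N -> napkinS n (~~ e) (pos k) = fnp (prv k).
Proof.
rewrite /napkinS /pos /fnp /prv; case: e => /= hk.
  case: eqP => h; first by rewrite h add0n modn_small; lia.
  rewrite mod_big; lia.
case: eqP => h; first by rewrite h subn0 modnn; lia.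
rewrite modn_small; lia.
Qed.

Lemma nap_pos p k : (k < n)%N ->
  napkinS n p (pos k) = fnp (if p == e then k else prv k).
Proof.
move=> hk; have [->|h] := eqVneq p e; first by rewrite nap_pos_e.
have -> : p = ~~ e by move: h; case: (p); case: (e).
by rewrite nap_pos_ne.
Qed.

Lemma iter_pos k : (k < n)%N -> iter k (stepS n e) 0%N = pos k.
Proof.
elim: k => [|k IH] hk /=; first by rewrite pos0.
rewrite IH; last lia. rewrite step_pos; last lia.
by rewrite /nxt; case: eqP => //; lia.
Qed.

End Pos.

End T1.
Import T1.

Ltac slia := repeat match goal with
  | H : _ |- _ => (match type of H with
                   | is_true (_ <= _)%N => fail 1
                   | is_true (~~ (_ == _)) => fail 1
                   | @eq nat _ _ => fail 1
                   | _ => clear H end) end; lia.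

Lemma seat_occ n st s p b x : occ (seat_diner n st s p b) x = (x == s) || occ st x.
Proof. by rewrite /seat_diner; case: ifP => _ //; case: ifP. Qed.
Lemma seat_w4 n st s p b : w4 (seat_diner n st s p b) = b.
Proof. by rewrite /seat_diner; case: ifP => _ //; case: ifP. Qed.
Lemma seat_prev n st s p b : Defs.prev (seat_diner n st s p b) = s.
Proof. by rewrite /seat_diner; case: ifP => _ //; case: ifP. Qed.

Section W4.
Variables (n : nat) (e : bool).
Hypothesis n0 : (0 < n)%N.

Local Notation pos := (pos n e).
Local Notation fnp := (fnp n e).
Local Notation prv := (prv n).
Local Notation nxt := (nxt n).

Definition bad st i := [&& ~~ occ st (pos i), ~~ nap st (fnp i) & ~~ nap st (fnp (prv i))].
Definition Qv st := (cnt st + \sum_(i < n) bad st i)%N.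
Definition Ev st := (\sum_(i < n) ~~ occ st (pos i))%N.
Definition iso st := forall i, (i < n)%N -> ~~ occ st (pos i) ->
   occ st (pos (prv i)) && occ st (pos (nxt i)).

Lemma prv_inj a b : (a < n)%N -> (b < n)%N -> prv a = prv b -> a = b.
Proof. rewrite /T1.prv; do 2 case: eqP; slia. Qed.
Lemma prv_eq_nxt i g : (i < n)%N -> (g < n)%N -> prv i = g -> i = nxt g.
Proof. rewrite /T1.prv /T1.nxt; do 2 case: eqP; slia. Qed.

Lemma seat_gen st g p b : (g < n)%N ->
  let st' := seat_diner n st (pos g) p b in
  (exists t, ((t == g) || (t == prv g)) /\
     forall i, (i < n)%N -> nap st' (fnp i) = (i != t) && nap st (fnp i))
  /\ cnt st' = (cnt st + (~~ nap st (fnp g) && ~~ nap st (fnp (prv g))))%N.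
Proof.
move=> hg /=; rewrite /seat_diner !nap_pos //.
have hg' : (prv g < n)%N by apply: prv_lt.
case E1: (nap st _); [|case E2: (nap st _)] => /=.
- split; last first.
    by move: E1; case: (p == e) => ->; rewrite ?andbF ?addn0.
  exists (if p == e then g else prv g); split; first by case: (p == e); rewrite eqxx ?orbT.
  move=> i hi; rewrite fnp_inj //; by case: (p == e).
- split; last first.
    by move: E2; case: (~~ p == e) => ->; rewrite ?andbF ?addn0.
  exists (if ~~ p == e then g else prv g); split; first by case: (~~ p == e); rewrite eqxx ?orbT.
  move=> i hi; rewrite fnp_inj //; by case: (~~ p == e).
- have [h1 h2] : nap st (fnp g) = false /\ nap st (fnp (prv g)) = false.
    by move: E1 E2; case: p; case: (e) => /= -> ->.
  split; last by rewrite h1 h2 addn1.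
  exists g; split; first by rewrite eqxx.
  move=> i hi; case: eqP => [->|] //=; by rewrite h1.
Qed.

Lemma first_empty_ok st g0 : (g0 < n)%N -> ~~ occ st (pos g0) ->
  exists g, [/\ (g < n)%N, first_empty n e st = pos g & ~~ occ st (pos g)].
Proof.
move=> hg0 hocc; rewrite /first_empty.
have -> : [seq iter k (stepS n e) 0%N | k <- iota 0 n] = [seq pos k | k <- iota 0 n].
  by apply/eq_in_map => k; rewrite mem_iota add0n => /andP[_ hk]; rewrite iter_pos.
set s := [seq _ | _ <- _].
have hs : has (fun x => ~~ occ st x) s.
  by apply/hasP; exists (pos g0) => //; apply/mapP; exists g0; rewrite ?mem_iota.
move: hs; rewrite has_filter.
case E: [seq x <- s | _] => [//|x s'] _ /=.
have : x \in [seq x <- s | ~~ occ st x] by rewrite E mem_head.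
rewrite mem_filter => /andP[hx /mapP[g]]; rewrite mem_iota add0n => /andP[_ hg] hxg.
by exists g; split => //; rewrite -hxg.
Qed.

Lemma occ_seat_pos st g p b i : (g < n)%N -> (i < n)%N ->
  occ (seat_diner n st (pos g) p b) (pos i) = (i == g) || occ st (pos i).
Proof. by move=> hg hi; rewrite seat_occ pos_inj. Qed.

Lemma w4_phase rest : forall st, iso st -> size rest = Ev st ->
  (forall p, W_step n e st p = seat_diner n st (first_empty n e st) p true) ->
  cnt (foldl (W_step n e) st rest) = Qv st.
Proof.
elim: rest => [|p r IH] st hiso hsz hstep /=.
  have h0 : forall i : 'I_n, occ st (pos i).
    move=> i; move: hsz => /esym/eqP; rewrite /Ev sum_nat_eq0 => /forallP/(_ i).
    by case: occ.
  by rewrite /Qv big1 ?addn0 // => i _; rewrite /bad h0.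
rewrite hstep.
have [g0 [hg0 hocc0]] : exists g0, (g0 < n)%N /\ ~~ occ st (pos g0).
  case: (boolP [exists i : 'I_n, ~~ occ st (pos i)]) => [/existsP[i hi]|]; first by exists i.
  rewrite negb_exists => /forallP h; move: hsz; rewrite /Ev big1 // => i _.
  by move: (h i); case: occ.
have [g [hg -> hocc]] := @first_empty_ok st g0 hg0 hocc0.
set st' := seat_diner _ _ _ _ _.
have [[t [ht hnap]] hcnt] := seat_gen st g p true hg.
rewrite -/st' in ht hnap hcnt.
have hoc i : (i < n)%N -> occ st' (pos i) = (i == g) || occ st (pos i).
  by move=> hi; rewrite occ_seat_pos.
have hbad i : (i < n)%N -> i != g -> bad st' i = bad st i.
  move=> hi hig; rewrite /bad hoc // (negbTE hig) /=.
  case hoi: (occ st (pos i)) => //=.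
  have hpi : (prv i < n)%N by apply: prv_lt.
  rewrite !hnap //.
  have -> : (i != t).
    apply/eqP => hit; move: ht; rewrite -hit (negbTE hig) /= => /eqP hip.
    by move: (hiso g hg hocc); rewrite -hip hoi.
  have -> : (prv i != t).
    apply/eqP => hit; move: ht => /orP[] /eqP htt.
      have hin := @prv_eq_nxt i g hi hg (etrans hit htt).
      by move: (hiso g hg hocc); rewrite -hin hoi andbF.
    have hig' := @prv_inj i g hi hg (etrans hit htt).
    by move: hig; rewrite hig' eqxx.
  by [].
have hsum : (\sum_(i < n) bad st i = bad st g + \sum_(i < n | i != Ordinal hg) bad st' i)%N.
  rewrite (bigD1 (Ordinal hg)) //=; congr (_ + _)%N.
  by apply: eq_bigr => i hi; rewrite hbad.
have hE : (Ev st = 1 + \sum_(i < n | i != Ordinal hg) ~~ occ st' (pos i))%N.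
  rewrite /Ev (bigD1 (Ordinal hg)) //= hocc; congr (_ + _)%N.
  by apply: eq_bigr => i hi; rewrite hoc // (negbTE (hi : (i : nat) != g)).
rewrite IH.
- rewrite /Qv hsum (bigD1 (Ordinal hg)) //= hcnt.
  have -> : bad st' g = false by rewrite /bad hoc // eqxx.
  by rewrite [bad st g]/bad hocc /= add0n addnA.
- move=> i hi; rewrite hoc // => /norP[_ hi'].
  by move: (hiso i hi hi'); rewrite !hoc ?prv_lt ?nxt_lt // => /andP[-> ->]; rewrite !orbT.
- rewrite /Ev (bigD1 (Ordinal hg)) //= hoc // eqxx /=; move: hsz; rewrite hE /= add0n add1n; by move=> [->].
- by move=> q; rewrite /W_step /st' seat_w4.
Qed.

Lemma Ev0 st : Ev st = 0%N -> Qv st = cnt st.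
Proof.
move=> hsz.
have h0 : forall i : 'I_n, occ st (pos i).
  move=> i; move: hsz => /eqP; rewrite /Ev sum_nat_eq0 => /forallP/(_ i).
  by case: occ.
by rewrite /Qv big1 ?addn0 // => i _; rewrite /bad h0.
Qed.

Record Inv1 st j c : Prop := {
  i_lt : (j < n)%N;
  i_w4 : w4 st = false;
  i_prev : Defs.prev st = pos j;
  i_side : (prevside st == Some e) = c;
  i_occ0 : occ st (pos 0);
  i_occj : occ st (pos j);
  i_occgt : forall i, (j < i < n)%N -> occ st (pos i) = false;
  i_iso : forall i, (i < j)%N -> ~~ occ st (pos i) ->
            occ st (pos (prv i)) && occ st (pos (nxt i));
  i_napgt : forall i, (j < i < n)%N -> nap st (fnp i);
  i_napj : nap st (fnp j) = ~~ c }.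

Definition Q1 st j := (cnt st + \sum_(i < j) bad st i)%N.

Fixpoint Af (r : nat) (c : bool) (xs : seq bool) : nat :=
  match xs with
  | [::] => 0%N
  | x :: xs' => if (2 <= r)%N then ((c && ~~ x) + Af (r - (if c then 2 else 1)) x xs')%N
                else 0%N
  end.

Lemma Qv_Q1 st j c : Inv1 st j c -> Qv st = Q1 st j.
Proof.
case=> hj _ _ _ _ hoj hgt _ hngt _.
rewrite /Qv /Q1 -!(big_mkord (fun _ => true) (fun i => nat_of_bool (bad st i))) (@big_cat_nat _ _ _ j 0 n) /= ?(ltnW hj) //.
suff -> : (\sum_(j <= i < n) bad st i = 0)%N by rewrite addn0.
rewrite big_nat_cond big1 // => i /andP[/andP[hji hin] _].
rewrite /bad; have [->|hne] := eqVneq i j; first by rewrite hoj.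
by rewrite hngt ?andbF //; apply/andP; split => //; rewrite ltn_neqAle eq_sym hne.
Qed.

Lemma seat_pref st s p b : nap st (napkinS n p s) ->
  let st' := seat_diner n st s p b in
  [/\ cnt st' = cnt st, prevside st' = Some p &
      forall k, nap st' k = (k != napkinS n p s) && nap st k].
Proof. by move=> h; rewrite /seat_diner h. Qed.

Lemma phase1_step st j c p : Inv1 st j c -> (j.+2 < n)%N ->
  let j' := if c then j.+2 else j.+1 in
  let x := (p == e) in
  [/\ Inv1 (W_step n e st p) j' x, Ev st = (Ev (W_step n e st p)).+1 &
      Q1 (W_step n e st p) j' = (Q1 st j + (c && ~~ x))%N].
Proof.
move=> I hj2 j' x.
case: (I) => hj hw hpr hsd ho0 hoj hogt hiso hngt hnj.
have hn1 : nxt j = j.+1 by rewrite /T1.nxt; case: eqP => //; slia.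
have hn2 : nxt j.+1 = j.+2 by rewrite /T1.nxt; case: eqP => //; slia.
have hWs : W_step n e st p = seat_diner n st (pos j') p false.
  rewrite /W_step hw hpr step_pos // hn1 step_pos ?hn2 //; last slia.
  rewrite !hogt /= ?hsd /j'; first by case: (c).
  all: try (apply/andP; split; slia).
rewrite hWs.
have hj'n : (j' < n)%N by rewrite /j'; case: (c); slia.
have hprv : prv j' = j'.-1 by rewrite /T1.prv /j'; case: (c) => /=.
set f1 := if x then j' else j'.-1.
have hf1n : (f1 < n)%N by rewrite /f1; case: (x); slia.
have hf1 : napkinS n p (pos j') = fnp f1 by rewrite nap_pos // hprv.
have hav : nap st (napkinS n p (pos j')).
  rewrite hf1 /f1 /j'; case: (x); case: (c) hnj => hnj; try (apply: hngt; apply/andP; split; slia).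
  by rewrite hnj.
have [hcnt hside hnap0] := @seat_pref st (pos j') p false hav.
set st' := seat_diner _ _ _ _ _.
rewrite -/st' in hcnt hside hnap0.
have hnap i : (i < n)%N -> nap st' (fnp i) = (i != f1) && nap st (fnp i).
  by move=> hi; rewrite hnap0 hf1 fnp_inj.
have hoc i : (i < n)%N -> occ st' (pos i) = (i == j') || occ st (pos i).
  by move=> hi; rewrite occ_seat_pos.
have hjj' : (j < j')%N by rewrite /j'; case: (c).
have hj'2 : (j' <= j.+2)%N by rewrite /j'; case: (c) => /=; slia.
have hf1j : (j <= f1)%N by rewrite /f1 /j'; case: (x); case: (c) => /=; slia.
split.
- split.
  + exact: hj'n.
  + by rewrite seat_w4.
  + by rewrite seat_prev.
  + by rewrite hside.
  + by rewrite hoc // ho0 orbT.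
  + by rewrite hoc // eqxx.
  + move=> i /andP[h1 h2]; rewrite hoc // hogt; last by apply/andP; split; slia.
    by rewrite orbF; apply/eqP; slia.
  + move=> i hi; rewrite hoc; last slia.
    case/norP => hij0 hoi.
    have hpi : (prv i < n)%N by apply: prv_lt; slia.
    have hni : (nxt i < n)%N by apply: nxt_lt; slia.
    rewrite !hoc //.
    have [hlt|hge] := ltnP i j.
      by case/andP: (hiso i hlt hoi) => -> ->; rewrite !orbT.
    have [hij|hij'] := eqVneq i j; first by move: hoi; rewrite hij hoj.
    have hi1 : i = j.+1 by move/eqP: hij'; slia.
    have hc : c by move: hi; rewrite /j'; case: (c) => //; slia.
    rewrite hi1 hn2 /T1.prv /= hoj /j' hc eqxx; by rewrite !orbT.
  + move=> i /andP[h1 h2]; rewrite hnap // hngt; last by apply/andP; split; slia.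
    by rewrite andbT; apply/eqP; move: hf1j; rewrite /f1; case: (x); slia.
  + rewrite hnap // /f1; case: (x) => /=; first by rewrite eqxx.
    rewrite hngt ?andbT; last by apply/andP; split.
    by apply/eqP; slia.
- rewrite /Ev (bigD1 (Ordinal hj'n)) //= [in RHS](bigD1 (Ordinal hj'n)) //=.
  rewrite hoc // eqxx hogt /=; last by apply/andP; split.
  rewrite add0n add1n; congr _.+1; apply: eq_bigr => i hi.
  by rewrite hoc // (negbTE (hi : (i : nat) != j')).
- have hb i : (i < j)%N -> bad st' i = bad st i.
    move=> hi; rewrite /bad hoc; last slia.
    have -> : (i == j') = false by apply/eqP; slia.
    case hoi: (occ st (pos i)) => //=.
    have hi0 : i != 0%N by apply/eqP => h0; move: hoi; rewrite h0 ho0.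
    have hpi : prv i = i.-1 by rewrite /T1.prv (negbTE hi0).
    rewrite !hnap ?hpi; [|slia|slia].
    have -> : (i != f1) by apply/eqP; slia.
    have -> : (i.-1 != f1) by apply/eqP; slia.
    by [].
  rewrite /Q1 hcnt -addnA; congr (_ + _)%N.
  have hsumj : (\sum_(i < j) bad st' i = \sum_(i < j) bad st i)%N.
    by apply: eq_bigr => i _; rewrite hb.
  have hbj : bad st' j = false by rewrite /bad hoc ?hoj ?orbT; last slia.
  rewrite /j'; move: (hnap j.+1) (hoc j.+1) hnj; rewrite /f1 /j'.
  case: (c) => /= hn hoc1 hnj'.
    rewrite !big_ord_recr /= hsumj hbj addn0; congr (_ + _)%N.
    rewrite /bad hoc1 ?hogt; [|by apply/andP; split; slia|slia].
    rewrite /T1.prv /= hn; last slia. rewrite hnap; last slia.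
    rewrite hnj' andbF /= hngt; last by apply/andP; split; slia.
    by rewrite (ltn_eqF (ltnSn j.+1)); case: (x) => /=; rewrite ?eqxx ?(ltn_eqF (ltnSn j.+1)).
  by rewrite big_ord_recr /= hsumj hbj !addn0.
Qed.

Lemma phase1 rest : forall st j c, Inv1 st j c -> size rest = Ev st ->
  cnt (foldl (W_step n e) st rest) =
    (Q1 st j + Af (n.-1 - j) c [seq p == e | p <- rest])%N.
Proof.
elim: rest => [|p r IH] st j c I hsz /=.
  by rewrite addn0 -(@Qv_Q1 st j c I) Ev0 // -hsz.
have [hj2|hj2] := ltnP j.+2 n.
- have [I' hE hQ] := @phase1_step st j c p I hj2.
  rewrite (IH _ _ _ I'); last by move: hsz; rewrite hE => /= -[].
  rewrite hQ -addnA; congr (_ + _)%N.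
  rewrite (_ : (2 <= n.-1 - j)%N = true); last by apply/idP; slia.
  congr (_ + Af _ _ _)%N; case: (c); slia.
case: (I) => hj hw hpr hsd ho0 hoj hogt hiso hngt hnj.
rewrite (_ : (2 <= n.-1 - j)%N = false); last by apply/negbTE; rewrite -ltnNge; slia.
rewrite addn0 -(@Qv_Q1 st j c I) (@w4_phase (p :: r)) //.
- move=> i hi hoi.
  have [hlt|hge] := ltnP i j; first exact: hiso.
  have [hij|hij] := eqVneq i j; first by move: hoi; rewrite hij hoj.
  have hi1 : i = n.-1 by move/eqP: hij; slia.
  have -> : prv i = j by rewrite /T1.prv; case: eqP; slia.
  have -> : nxt i = 0%N by rewrite /T1.nxt; case: eqP; slia.
  by rewrite hoj ho0.
- move=> q.
  have hocc2 : occ st (stepS n e (pos j)) || occ st (stepS n e (stepS n e (pos j))).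
    rewrite step_pos //; have [h|h] := eqVneq j.+1 n.
      by rewrite /T1.nxt h eqxx ho0.
    have hn1 : nxt j = j.+1 by rewrite /T1.nxt (negbTE h).
    rewrite hn1 step_pos; try slia.
    have -> : nxt j.+1 = 0%N by rewrite /T1.nxt; case: eqP => //; move/eqP: h; slia.
    by rewrite ho0 orbT.
  rewrite /W_step hw hpr; move: hocc2.
  by case/orP => ->; rewrite ?andbF.
Qed.

Definition st0 := WState (fun x => x == 0%N) (fun k => k != napkinS n e 0%N) 0%N (Some e) false 0%N.

Lemma init_inv : Inv1 st0 0 true.
Proof.
have h : napkinS n e (pos 0) = fnp 0 by rewrite nap_pos_e.
rewrite pos0 in h.
have hp : forall i, (i < n)%N -> (pos i == 0%N) = (i == 0%N).
  by move=> i hi; have := @pos_inj n e n0 i 0 hi n0; rewrite pos0.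
split => //=.
- by rewrite pos0.
- by rewrite eqxx.
- by rewrite pos0.
- by rewrite pos0.
- by move=> i /andP[h1 h2]; rewrite hp //; apply/eqP; slia.
- by move=> i /andP[h1 h2]; rewrite h fnp_inj //; apply/eqP; slia.
- by rewrite h eqxx.
Qed.

Lemma init_Ev : Ev st0 = n.-1.
Proof.
rewrite /Ev -(big_mkord (fun _ => true) (fun i => nat_of_bool (~~ occ st0 (pos i)))).
rewrite big_ltn // /= pos0 eqxx add0n.
rewrite (eq_big_nat _ _ (F2 := fun _ => 1%N)); last first.
  move=> i /andP[h1 h2] /=.
  by rewrite (_ : (pos i == 0%N) = false) //; have := @pos_inj n e n0 i 0 h2 n0; rewrite pos0 => ->; apply/eqP; slia.
by rewrite sum_nat_const_nat muln1; slia.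
Qed.

Lemma nuW_A rest : size rest = n.-1 ->
  nuW n (e :: rest) = Af n.-1 true [seq p == e | p <- rest].
Proof.
move=> hs; rewrite /nuW -/st0 (@phase1 rest _ _ _ init_inv); last by rewrite init_Ev.
by rewrite /Q1 big_ord0 subn0.
Qed.

End W4.
Local Open Scope ring_scope.

Lemma tuple_sum (R : nmodType) L (F : seq bool -> R) :
  \sum_(t : L.+1.-tuple bool) F t = \sum_(x : bool) \sum_(t : L.-tuple bool) F (x :: t).
Proof.
rewrite pair_big /=.
rewrite (reindex (fun p : bool * L.-tuple bool => [tuple of p.1 :: p.2])) /=.
  by apply: eq_bigr => -[x t].
exists (fun t : L.+1.-tuple bool => (thead t, [tuple of behead t])).
  by move=> [x t] _ /=; congr (_, _); apply: val_inj.
by move=> t _; rewrite [RHS]tuple_eta.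
Qed.

Lemma map_sum (R : nmodType) L e (F : seq bool -> R) :
  \sum_(t : L.-tuple bool) F [seq p == e | p <- t] = \sum_(t : L.-tuple bool) F t.
Proof.
elim: L F => [|L IH] F.
  by apply: eq_bigr => t _; rewrite tuple0.
rewrite (@tuple_sum _ L (fun t => F [seq p == e | p <- t])) tuple_sum.
rewrite (eq_bigr (fun x => \sum_(t : L.-tuple bool) F ((x == e) :: t))); last first.
  by move=> x _; exact: (IH (fun s => F ((x == e) :: s))).
by rewrite !big_bool; clear IH; case: e => /=; rewrite addrC.
Qed.

Definition Tp r c L : {poly int} := \sum_(t : L.-tuple bool) 'X^(Af r c t).

Lemma Af_small r c xs : (r <= 1)%N -> Af r c xs = 0%N.
Proof. by case: xs => //= x xs h; rewrite leqNgt ltnS h. Qed.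

Lemma T_small r c L : (r <= 1)%N -> Tp r c L = (2 ^ L)%:R.
Proof.
move=> h; rewrite /Tp (eq_bigr (fun _ => 1)); last by move=> t _; rewrite Af_small.
by rewrite sumr_const card_tuple card_bool natrX.
Qed.

Lemma T_step r c L : (2 <= r)%N ->
  Tp r c L.+1 = Tp (r - (if c then 2 else 1)) true L + 'X^c * Tp (r - (if c then 2 else 1)) false L.
Proof.
move=> h; rewrite /Tp (@tuple_sum _ L (fun t => 'X^(Af r c t))) big_bool /= h.
rewrite mulr_sumr; congr (_ + _); apply: eq_bigr => t _.
  by rewrite andbF add0n.
by rewrite andbT exprD.
Qed.

Lemma T_double L : forall r c, (r <= L)%N -> Tp r c L.+1 = Tp r c L + Tp r c L.
Proof.
elim: L => [|L IH] r c hr.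
  by move: hr; rewrite leqn0 => /eqP ->; rewrite !T_small // expn1 expn0 -natrD.
have [h1|h2] := leqP r 1.
  by rewrite !T_small // expnS natrM; ring.
rewrite T_step // IH; last by case: (c); lia.
rewrite IH; last by case: (c); lia.
by rewrite T_step //; ring.
Qed.

Definition ff r := Tp r true r.
Definition gg r := Tp r false r.

Lemma ff_rec r : ff r.+2 = 2%:R * ff r + 2%:R * 'X * gg r.
Proof.
rewrite /ff /gg T_step //= !subSS subn0 !T_double //; ring.
Qed.

Lemma gg_rec r : gg r.+1 = ff r + gg r.
Proof.
case: r => [|r].
  by rewrite /ff /gg !T_small.
by rewrite /gg /ff T_step //= subSS subn0 expr0 mul1r.
Qed.

Lemma ff0 : ff 0 = 1. Proof. by rewrite /ff T_small. Qed.
Lemma gg0 : gg 0 = 1. Proof. by rewrite /gg T_small. Qed.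
Lemma ff1 : ff 1 = 2%:R. Proof. by rewrite /ff T_small. Qed.

Lemma Wpoly_S k : Wpoly k.+1 = ff k + ff k.
Proof.
have h : forall x, \sum_(t : k.-tuple bool) 'X^(nuW k.+1 (x :: t)) = ff k.
  move=> x.
  rewrite (eq_bigr (fun t : k.-tuple bool => 'X^(Af k true [seq p == x | p <- t]))); last first.
    by move=> t _; rewrite (@nuW_A k.+1 x isT t) // size_tuple.
  by rewrite (@map_sum _ k x (fun s => 'X^(Af k true s))).
rewrite /Wpoly /= (@tuple_sum _ k (fun t => 'X^(nuW k.+1 t))) big_bool.
by rewrite !h.
Qed.

Lemma W0 : Wpoly 0 = 2%:P.
Proof. by []. Qed.


Theorem corollary3 :
  forall m : nat, \sum_(i < m.+1) Dcoef i * Wpoly (m - i) = Ncoef m.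
Proof.
have f2 : ff 2 = 2%:R + 2%:R * 'X by rewrite ff_rec ff0 gg0; ring.
case=> [|[|[|k]]].
- by rewrite big_ord_recl big_ord0 /= W0; ring.
- rewrite !big_ord_recl big_ord0 /=.
  rewrite /Dcoef /Ncoef /= subn0 (Wpoly_S 0) W0 ff0; ring.
- rewrite !big_ord_recl big_ord0 /=.
  rewrite /Dcoef /Ncoef /= subn0 (Wpoly_S 1) (Wpoly_S 0) W0 ff0 ff1; ring.
rewrite !big_ord_recl /= big1; last first.
  by move=> i _; rewrite /Dcoef /= nth_nil mul0r.
rewrite /Dcoef /Ncoef /= subn0 !subSS subn0.
case: k => [|k].
  rewrite (Wpoly_S 2) (Wpoly_S 1) (Wpoly_S 0) W0 f2 ff1 ff0; ring.
rewrite (Wpoly_S k.+3) (Wpoly_S k.+2) (Wpoly_S k.+1) (Wpoly_S k).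
rewrite ff_rec (ff_rec k) gg_rec; ring.
Qed.
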